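(* There exists $N$ such that the following holds for all $n\ge N$. Let $G$ be a graph with vertex set $\{v_1,\dots,v_n\}$, let $0\le k\le\frac1{20}\sqrt n$, write $G_i=G-v_i$ and $s_t=\sum_{i=1}^{n-k}d_t(G_i)$, and $d_t=d_t(G)$. Let $t$ be an integer with $0\le t\le\frac{2n}{3}-1$ and suppose $d_{t+1}\le\sqrt n$. Define $d_t'=\frac{1}{n-1-t}\bigl(s_t-(t+1)d_{t+1}\bigr)$. Then $d_t\ge d_t'$; moreover, if $d_t\le2\sqrt n$ then $d_t-d_t'<\frac12$ (so $d_t$ is the integer nearest to $d_t'$), and if $d_t>2\sqrt n$ then $d_t'\ge\frac12 d_t>\sqrt n$.
   Context: All graphs are finite, simple and undirected. For a graph $G'$ and integer $t$, $d_t(G')$ is the number of vertices of degree $t$ in $G'$. For $v\in V(G)$, $G-v$ is obtained by deleting $v$ and its incident edges. *)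

(* Defs.v *)
From mathcomp Require Import all_boot all_order all_algebra.
Set Implicit Arguments. Unset Strict Implicit. Unset Printing Implicit Defensive.

(* A simple graph on a finite type T is a symmetric irreflexive relation e.
   The graph induced on the vertex set V : {set T}: *)

Definition deg_in (T : finType) (V : {set T}) (e : rel T) (u : T) : nat :=
  #|[set w in V | e u w]|.

Definition dcount (T : finType) (V : {set T}) (e : rel T) (t : nat) : nat :=
  #|[set u in V | deg_in V e u == t]|.

Definition dG (T : finType) (e : rel T) (t : nat) : nat := dcount [set: T] e t.

Definition dGdel (T : finType) (e : rel T) (v : T) (t : nat) : nat :=
  dcount ([set: T] :\ v) e t.

(* s_t = sum_{i=1}^{n-k} d_t(G - v_i), vertices v_1..v_n being 0..n-1 *)
Definition s_sum (n : nat) (e : rel 'I_n) (k t : nat) : nat :=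
  \sum_(i < n | (i < n - k)%N) dGdel e i t.

(* Main.v *)
Require Import Defs.
From mathcomp Require Import all_boot all_order all_algebra.
From mathcomp Require Import zify ring lra.
Import Order.TTheory GRing.Theory Num.Theory.
Set Implicit Arguments. Unset Strict Implicit. Unset Printing Implicit Defensive.

Lemma card_sum (T:finType) (P : pred T) : #|[set x | P x]| = \sum_x P x.
Proof. rewrite -sum1_card big_mkcond /=; apply: eq_bigr => x _; by rewrite inE; case: (P x). Qed.

Lemma deg_del (T: finType) (e: rel T) u v :
  deg_in ([set: T] :\ v) e u + (e u v) = deg_in [set: T] e u.
Proof.
rewrite /deg_in (cardsD1 v [set w in [set: T] | e u w]) addnC; congr (_ + _).
  by rewrite !inE.
by apply: eq_card => w; rewrite !inE; case: (w == v).
Qed.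

Lemma cnt_bounds (T : finType) (e : rel T) (irr: irreflexive e) (S : {set T}) t u :
 let c := #|[set v in S | (u != v) && (deg_in ([set: T] :\ v) e u == t)]| in
 let a := (deg_in [set: T] e u == t) in let b := (deg_in [set: T] e u == t.+1) in
 c <= a * (#|T| - 1 - t) + b * t.+1 /\ a * (#|T| - 1 - t) + b * t.+1 <= c + #|~: S| * (a + b).
Proof.
move=> c a b.
set N := [set w | e u w].
have dN : deg_in [set: T] e u = #|N|.
  by apply: eq_card => w; rewrite !inE.
have uN : u \notin N by rewrite inE irr.
have key v : (u != v) && (deg_in ([set: T] :\ v) e u == t) =
   ((#|N| == t) && (v \notin u |: N)) || ((#|N| == t.+1) && (v \in N)).
  have := deg_del e u v; rewrite dN.
  case: (eqVneq u v) => [<-|nuv] /=.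
    by move=> _; rewrite setU11 (negbTE uN) !andbF.
  rewrite !inE (eq_sym v u) (negbTE nuv) /=.
  case: (e u v) => /= H; rewrite ?andbT ?andbF ?orbF;
    by do 2! case: eqP; lia.
rewrite /a /b dN.
have cS (X : {set T}) : #|X| <= #|S :&: X| + #|~: S|.
  rewrite -(cardsID S X) setIC leq_add2l; apply: subset_leq_card.
  by apply/subsetP => x; rewrite !inE => /andP[].
case: (eqVneq #|N| t) => [Nt|Nt].
  have cT : #|~: (u |: N)| = #|T| - 1 - t.
    have := cardsC (u |: N); rewrite cardsU1 uN add1n Nt. lia.
  have -> : c = #|S :&: ~: (u |: N)|.
    apply: eq_card => v; rewrite !inE key Nt eqxx /=.
    have -> : (t == t.+1) = false by case: eqP; lia.
    by rewrite orbF !inE.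
  have := cS (~: (u |: N)); have : #|S :&: ~: (u |: N)| <= #|~: (u |: N)|.
    by apply: subset_leq_card; rewrite subsetIr.
  rewrite Nt cT; case: eqP; lia.
case: (eqVneq #|N| t.+1) => [Nt1|Nt1].
  have -> : c = #|S :&: N|.
    apply: eq_card => v; rewrite !inE key Nt1 eqxx /=.
    have -> : (t.+1 == t) = false by case: eqP; lia.
    by rewrite /= !inE.
  have := cS N; have : #|S :&: N| <= #|N|.
    by apply: subset_leq_card; rewrite subsetIr.
  rewrite Nt1 /=; lia.
have -> : c = 0.
  apply: eq_card0 => v; rewrite !inE key (negbTE Nt) (negbTE Nt1).
  by rewrite andbF.
rewrite /=; lia.
Qed.

Lemma s_bounds (T : finType) (e : rel T) (irr : irreflexive e) (S : {set T}) t :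
 let s := \sum_(v in S) dGdel e v t in
 s <= (#|T| - 1 - t) * dG e t + t.+1 * dG e t.+1 /\
 (#|T| - 1 - t) * dG e t + t.+1 * dG e t.+1 <= s + #|~: S| * (dG e t + dG e t.+1).
Proof.
move=> s.
have Es : s = \sum_(u : T) #|[set v in S | (u != v) && (deg_in ([set: T] :\ v) e u == t)]|.
  rewrite /s /dGdel /dcount.
  under eq_bigr => v _ do rewrite card_sum.
  rewrite exchange_big /=; apply: eq_bigr => u _.
  rewrite card_sum big_mkcond /=; apply: eq_bigr => v _.
  by rewrite !inE andbT; case: (v \in S).
have Ed (r : nat) : dG e r = \sum_(u : T) (deg_in [set: T] e u == r).
  by rewrite /dG /dcount card_sum; apply: eq_bigr => u _; rewrite in_setT.
rewrite Es !Ed; split.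
  rewrite !big_distrr /= -big_split /=; apply: leq_sum => u _.
  have [h _] := cnt_bounds irr S t u; by rewrite mulnC [t.+1 * _]mulnC.
rewrite !big_distrr /= -!big_split /=.
rewrite big_distrr /= -big_split /=; apply: leq_sum => u _.
have [_ h] := cnt_bounds irr S t u; by rewrite mulnC [t.+1 * _]mulnC.
Qed.

Lemma sum_ge (m c : nat) : \sum_(i < m) (c <= i) = m - c.
Proof.
elim: m => [|m IH]; first by rewrite big_ord0.
rewrite big_ord_recr /= IH; case: leqP => h /=; lia.
Qed.

Lemma compl_card n k : #|~: [set i : 'I_n | (i < n - k)%N]| <= k.
Proof.
have -> : #|~: [set i : 'I_n | (i < n - k)%N]| = #|[set i : 'I_n | (n - k <= i)%N]|.
  by apply: eq_card => i; rewrite !inE -leqNgt.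
rewrite card_sum sum_ge; lia.
Qed.

Theorem mainTheorem7 :
  exists N : nat, forall n : nat, (N <= n)%N ->
  forall (e : rel 'I_n), symmetric e -> irreflexive e ->
  forall k t : nat,
    (400 * k ^ 2 <= n)%N ->
    (3 * (t + 1) <= 2 * n)%N ->
    (dG e t.+1 ^ 2 <= n)%N ->
    let dt := dG e t in
    let dt' : rat :=
      (((s_sum e k t)%:R - (t + 1)%:R * (dG e t.+1)%:R) / (n - 1 - t)%:R)%R in
    (dt'  <= dt%:R)%R /\
    ((dt ^ 2 <= 4 * n)%N -> (dt%:R - dt' < 1 / 2)%R) /\
    ((4 * n < dt ^ 2)%N ->
       (dt%:R / 2 <= dt')%R /\ (n%:R < (dt%:R / 2) ^+ 2 :> rat)%R).
Proof.
exists 0 => n _ e sym irr k t hk ht hd1 dt dt'.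
rewrite /dt' /dt.
rewrite addn1.
have hK := compl_card n k.
set S := [set i : 'I_n | (i < n - k)%N] in hK.
have Es : s_sum e k t = \sum_(v in S) dGdel e v t.
  by rewrite /s_sum; apply: eq_bigl => i; rewrite inE.
have [h1 h2] := s_bounds irr S t.
rewrite -Es card_ord in h1 h2.
move: hK h1 h2 hd1; set K := #|~: S|; set s := s_sum e k t; set a := dG e t;
  set b := dG e t.+1 => hK h1 h2 hd1.
have hD : (0 < n - 1 - t)%N by lia.
set D := (n - 1 - t)%N in hD h1 h2 *.
have hD3 : (n <= 3 * D)%N by lia.
have DR : (0 < D%:R :> rat)%R by rewrite ltr0n.
have h1' : (s%:R <= D%:R * a%:R + t.+1%:R * b%:R :> rat)%R.
  by move: h1; rewrite -(ler_nat rat) natrD 2!natrM.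
have h2' : (D%:R * a%:R + t.+1%:R * b%:R <= s%:R + K%:R * (a%:R + b%:R) :> rat)%R.
  by move: h2; rewrite -(ler_nat rat) natrD 2!natrM natrD natrM natrD.
have hKk : (400 * K ^ 2 <= n)%N.
  apply: leq_trans hk; rewrite leq_mul2l /=; by rewrite leq_exp2r.
have hKb : (20 * K * b <= n)%N.
  rewrite -(@leq_exp2r _ _ 2) //; apply: (@leq_trans (400 * K ^ 2 * b ^ 2)).
    by rewrite !expnMn.
  rewrite (_ : n ^ 2 = n * n); last by rewrite expnS expn1.
  by apply: leq_mul.
split.
  rewrite ler_pdivrMr //; lra.
split.
  move=> ha.
  have hKa : (10 * K * a <= n)%N.
    rewrite -(@leq_exp2r _ _ 2) //.
    have := leq_mul hKk ha; rewrite !expnMn (_ : 10 ^ 2 = 100) // (_ : n ^ 2 = n * n); last by rewrite expnS expn1.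
    nia.
  have hN : (2 * (K * a + K * b) < D)%N by lia.
  have hN' : (2%:R * (K%:R * a%:R + K%:R * b%:R) < D%:R :> rat)%R.
    by rewrite -!natrM -natrD -natrM ltr_nat.
  have -> : (a%:R - (s%:R - t.+1%:R * b%:R) / D%:R
     = (a%:R * D%:R - (s%:R - t.+1%:R * b%:R)) / D%:R :> rat)%R.
    by field; rewrite gt_eqF.
  rewrite ltr_pdivrMr //; lra.
move=> ha.
have a1 : (0 < a)%N by case: (posnP a) => // a0; move: ha; rewrite a0.
have hK20 : (20 * K <= n)%N.
  have n1 : (0 < n)%N by lia.
  rewrite -(@leq_exp2r _ _ 2) // expnMn (_ : 20 ^ 2 = 400) //; apply: leq_trans hKk _.
  by rewrite expnS expn1 leq_pmulr.
have hN : (2 * (K * a + K * b) <= D * a)%N.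
  have := leq_mul hK20 (leqnn a); have := leq_mul hD3 (leqnn a).
  have : (n <= n * a)%N by rewrite leq_pmulr.
  nia.
have hN' : (2%:R * (K%:R * a%:R + K%:R * b%:R) <= D%:R * a%:R :> rat)%R.
  by rewrite -!natrM -natrD -natrM ler_nat.
split.
  rewrite ler_pdivlMr //; lra.
have ha' : ((4 * n)%:R < (a ^ 2)%:R :> rat)%R by rewrite ltr_nat.
rewrite natrM natrX in ha'.
rewrite expr_div_n; lra.
Qed.
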